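(* Let $d\ge1$, $\delta>0$, and let $F:[-\delta,1+\delta]^d\to\mathbb{R}$ be convex, continuous, and continuously differentiable on $(-\delta,1+\delta)^d$. Then for every $\epsilon>0$ there exist $n\ge1$, $t>0$, $\boldsymbol{W}\in\mathbb{R}^{n\times d}$ and $\boldsymbol{a}\in\mathbb{R}^n$ such that $$\sup_{\boldsymbol{x}\in[0,1]^d}\big\|\nabla F(\boldsymbol{x})-\boldsymbol{W}^\top\mathrm{softmax}\big(t(\boldsymbol{W}\boldsymbol{x}+\boldsymbol{a})\big)\big\|<\epsilon .$$ Each such approximator $\boldsymbol{x}\mapsto\boldsymbol{W}^\top\mathrm{softmax}(t(\boldsymbol{W}\boldsymbol{x}+\boldsymbol{a}))$ is the gradient of the convex function $\boldsymbol{x}\mapsto\mathrm{LSE}_t(\{\boldsymbol{w}_i^\top\boldsymbol{x}+a_i\}_{i=1}^n)$, where $\boldsymbol{w}_i^\top$ is the $i$th row of $\boldsymbol{W}$.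
   Context: $\mathrm{softmax}(\boldsymbol{z})_i=e^{z_i}/\sum_j e^{z_j}$ for $\boldsymbol{z}\in\mathbb{R}^n$. For $t>0$ and a finite set $\mathcal{U}\subset\mathbb{R}$, $\mathrm{LSE}_t(\mathcal{U})=\frac1t\log\sum_{u\in\mathcal{U}}e^{tu}$. $\|\cdot\|$ is the Euclidean norm. *)

(* Defs.v *)
From HB Require Import structures.
From mathcomp Require Import all_boot all_order all_algebra.
From mathcomp Require Import all_classical all_reals all_analysis.
Set Implicit Arguments. Unset Strict Implicit. Unset Printing Implicit Defensive.
Import Order.TTheory GRing.Theory Num.Theory.
Import numFieldNormedType.Exports.
Local Open Scope classical_set_scope.
Local Open Scope ring_scope.

Section Defs.
Variable R : realType.

Definition enorm (n : nat) (v : 'rV[R]_n) : R :=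
  Num.sqrt (\sum_(i < n) v ord0 i ^+ 2).

Definition softmax (n : nat) (z : 'rV[R]_n) : 'rV[R]_n :=
  \row_i (expR (z ord0 i) / \sum_(j < n) expR (z ord0 j)).

Definition LSE (n : nat) (t : R) (u : 'rV[R]_n) : R :=
  t^-1 * ln (\sum_(i < n) expR (t * u ord0 i)).

Definition grad (d : nat) (f : 'rV[R]_d -> R) (x : 'rV[R]_d) : 'rV[R]_d :=
  \row_i ('D_(delta_mx ord0 i) f x).

Definition ccube (d : nat) (lo hi : R) : set 'rV[R]_d :=
  [set x | forall i, lo <= x ord0 i <= hi].
Definition ocube (d : nat) (lo hi : R) : set 'rV[R]_d :=
  [set x | forall i, lo < x ord0 i < hi].

Definition convex_on (d : nat) (A : set 'rV[R]_d) (f : 'rV[R]_d -> R) : Prop :=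
  forall x y, A x -> A y -> forall l : R, 0 <= l <= 1 ->
    f (l *: x + (1 - l) *: y) <= l * f x + (1 - l) * f y.

Definition softmax_approx (n d : nat) (t : R) (W : 'M[R]_(n, d)) (a : 'rV[R]_n)
  (x : 'rV[R]_d) : 'rV[R]_d :=
  softmax (t *: (x *m W^T + a)) *m W.

Definition lse_fun (n d : nat) (t : R) (W : 'M[R]_(n, d)) (a : 'rV[R]_n)
  (x : 'rV[R]_d) : R :=
  LSE t (x *m W^T + a).

End Defs.

(* Main.v *)
Require Import Defs.
From HB Require Import structures.
From mathcomp Require Import all_boot all_order all_algebra.
From mathcomp Require Import all_classical all_reals all_analysis.
From mathcomp Require Import ring lra.
From mathcomp Require Import finmap.
Import Order.TTheory GRing.Theory Num.Theory.
Import numFieldNormedType.Exports.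
Local Open Scope classical_set_scope.
Local Open Scope ring_scope.

Section GI.
Variables (R : realType) (d : nat) (delta : R) (F : 'rV[R]_d -> R).
Hypothesis Hconv : convex_on (ccube (d:=d) (- delta) (1 + delta)) F.
Hypothesis Hdiff : forall x, ocube (d:=d) (- delta) (1 + delta) x -> differentiable F x.

Lemma ocube_ccube {lo hi : R} {x : 'rV[R]_d} : ocube lo hi x -> ccube lo hi x.
Proof. by move=> H i; have /andP[a b] := H i; rewrite !ltW. Qed.

Lemma grad_ineq p y : ocube (-delta) (1+delta) p -> ccube (-delta) (1+delta) y ->
  F p + \sum_i grad F p ord0 i * (y - p) ord0 i <= F y.
Proof.
move=> Hp Hy; have dF := Hdiff _ Hp.
have E : 'D_(y - p) F p = \sum_i grad F p ord0 i * (y - p) ord0 i.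
  rewrite deriveE // {1}(row_sum_delta (y - p)) linear_sum.
  apply: eq_bigr => i _; rewrite linearZ /= -deriveE // /grad !mxE mulrC //.
rewrite -E.
suff : 'D_(y - p) F p <= F y - F p by lra.
set g := fun h : R => h^-1 *: ((F \o shift p) (h *: (y - p)) - F p).
have cg : cvg (g @ 0^') := @diff_derivable _ _ _ F p (y - p) dF.
have cr : g @ 0^'+ --> lim (g @ 0^').
  move=> A /cg /nbhs_ballP [_ /posnumP[e] xe_A].
  by exists e%:num => //= z xe_z; rewrite lt_def => /andP [xney _]; apply: xe_A.
apply: (cvgr_to_le cr).
near=> h.
have h0 : 0 < h by near: h; exact: nbhs_right_gt.
have h1 : h <= 1 by near: h; apply: nbhs_right_ltW; exact: ltr01.
rewrite /g /= /shift.
have -> : h *: (y - p) + p = h *: y + (1 - h) *: p.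
  by rewrite scalerBr scalerBl scale1r addrA addrAC.
have hc := Hconv y p Hy (ocube_ccube Hp) h.
rewrite h1 ltW //= in hc; have {}hc := hc isT.
rewrite -[leRHS](mulKf (lt0r_neq0 h0)) /GRing.scale /=.
rewrite ler_pM2l ?invr_gt0 //.
lra.
Unshelve. all: by end_near.
Qed.

End GI.
Section Helpers.
Variables (R : realType) (d : nat).

Lemma coord_le_norm (v : 'rV[R]_d) i : `|v ord0 i| <= `|v|.
Proof.
have /mapP[j Hj ->] : `|v ord0 i| \in [seq `|v x.1 x.2| | x : 'I_1 * 'I_d].
  by apply/mapP; exists (ord0, i) => //=; rewrite mem_enum.
have -> : `|v| = mx_norm v by []. by rewrite mx_normrE; apply/bigmax_geP; right => /=; exists j.
Qed.

Lemma norm_le_coords (v : 'rV[R]_d) (r : R) : 0 <= r ->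
  (forall i, `|v ord0 i| <= r) -> `|v| <= r.
Proof.
move=> r0 H; have -> : `|v| = mx_norm v by []. rewrite mx_normrE; apply/bigmax_leP; split => //.
by move=> [i j] _ /=; rewrite (ord1 i); exact: H.
Qed.

Lemma sum_delta (f : 'I_d -> R) k :
  \sum_i f i * (delta_mx ord0 k : 'rV[R]_d) ord0 i = f k.
Proof.
rewrite (bigD1 k) //= mxE !eqxx mulr1 big1 ?addr0 // => i ik.
by rewrite mxE (negbTE ik) andbF mulr0.
Qed.

Lemma enorm_le_sum (v : 'rV[R]_d) : enorm v <= \sum_i `|v ord0 i|.
Proof.
set S := \sum_i `|v ord0 i|.
have S0 : 0 <= S by apply: sumr_ge0 => i _.
rewrite /enorm -(ger0_norm S0) -sqrtr_sqr ler_sqrt ?sqr_ge0 //.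
have -> : S ^+ 2 = \sum_i `|v ord0 i| * S by rewrite -mulr_suml expr2.
apply: ler_sum => i _.
rewrite -real_normK ?num_real // expr2 ler_wpM2l //.
rewrite /S (bigD1 i) //= lerDl sumr_ge0 //.
Qed.

Lemma expR_neg_le (y : R) : 0 <= y -> expR (- y) <= (1 + y)^-1.
Proof.
move=> y0; rewrite expRN lef_pV2 ?posrE ?expR_gt0 ?expR_ge1Dx //.
lra.
Qed.


End Helpers.
Arguments coord_le_norm {R d}. Arguments norm_le_coords {R d}. Arguments sum_delta {R d}. Arguments enorm_le_sum {R d}.
Lemma ballE (R : realType) d (x y : 'rV[R]_d) (r : R) : ball x r y = (`|x - y| < r).
Proof. by rewrite mx_norm_ball. Qed.

Lemma min_seq_pos (A : eqType) (R : realType) (s : seq (A * R)) :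
  exists h : R, 0 < h /\ forall q, q \in s -> 0 < q.2 -> h <= q.2.
Proof.
elim: s => [|q s [h [h0 Hh]]]; first by exists 1.
exists (if 0 < q.2 then Num.min h q.2 else h); split.
  by case: ifP => // q0; rewrite lt_min h0.
move=> q'; rewrite inE => /orP[/eqP -> ->|Hq q0]; first by rewrite ge_min lexx orbT.
case: ifP => _; last exact: Hh.
by rewrite ge_min Hh.
Qed.

Section Cover.
Variables (R : realType) (d : nat) (delta : R) (F : 'rV[R]_d -> R).
Hypothesis Hd : 0 < delta.
Hypothesis Hcont : {in ocube (d:=d) (- delta) (1 + delta), continuous (grad F)}.

Lemma ball_ocube (x y : 'rV[R]_d) : ccube 0 1 x -> `|y - x| < delta ->
  ocube (- delta) (1 + delta) y.
Proof.
move=> Hx Hy i; have /andP[x0 x1] := Hx i.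
have := le_lt_trans (coord_le_norm (y - x) i) Hy; rewrite !mxE => H.
move: H; rewrite ltr_norml => /andP[H1 H2].
lra.
Qed.

Lemma cube01_compact : compact (ccube (R:=R) (d:=d) 0 1).
Proof.
have -> : ccube (R:=R) (d:=d) 0 1 = [set v : 'rV[R]_d | forall i, `[(0:R), 1]%classic (v ord0 i)].
  by apply/seteqP; split => v H i; have := H i; rewrite /= in_itv.
by apply: (@rV_compact _ _ (fun=> `[(0:R), 1]%classic)) => i; exact: segment_compact.
Qed.

Lemma lebesgue (e : R) : 0 < e -> exists h : R, exists s : seq 'rV[R]_d,
  [/\ 0 < h, (forall c, c \in s -> ccube 0 1 c),
   (forall x y, ccube 0 1 x -> `|y - x| < h ->
      ocube (- delta) (1 + delta) y /\ `|grad F y - grad F x| < e) &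
   (forall x, ccube 0 1 x -> exists2 c, c \in s & `|grad F x - grad F c| < e)].
Proof.
move=> e0.
pose P := fun q : 'rV[R]_d * R => [/\ ccube 0 1 q.1, 0 < q.2 &
   forall y, `|y - q.1| < q.2 -> ocube (- delta) (1 + delta) y /\
                             `|grad F y - grad F q.1| < e / 2].
pose f := fun q : 'rV[R]_d * R => ball q.1 (q.2 / 2).
have := cube01_compact; rewrite compact_cover => /(_ _ P f).
case.
- by move=> q _; exact: ball_open.
- move=> x Hx.
  have Ox : ocube (- delta) (1 + delta) x.
    by apply: ball_ocube Hx _; rewrite subrr normr0.
  have := Hcont x (mem_set Ox) (ball (grad F x) (e / 2)) (nbhsx_ballx _ _ _).
  have /[swap]/[apply] : 0 < e / 2 by rewrite divr_gt0.
  move=> /nbhs_ballP [r /= r0 Hr].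
  exists (x, Num.min r delta) => //=.
    split => // [|y Hy]; first by rewrite lt_min r0 Hd.
    split; first by apply: ball_ocube Hx (lt_le_trans Hy _); rewrite ge_min lexx orbT.
    have : ball x r y by rewrite ballE distrC (lt_le_trans Hy) // ge_min lexx.
    by move=> /Hr; rewrite /= ballE distrC.
  by rewrite /f ballE subrr normr0 divr_gt0 // lt_min r0 Hd.
move=> D' HD' Hcov.
have [h [h0 Hh]] := min_seq_pos _ _ (enum_fset D').
exists (h / 2), [seq q.1 | q <- enum_fset D'].
have PD : forall q, q \in D' -> P q by move=> q /HD' /set_mem.
split.
- by rewrite divr_gt0.
- by move=> c /mapP [q /PD [] + _ _ ->].
- move=> x y Hx Hy.
  have [q Dq] := Hcov x Hx; rewrite /f ballE => Hxq.
  have [Cq q0 Hq] := PD q Dq.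
  have hq : h <= q.2 by exact: Hh Dq q0.
  have Hy' : `|y - q.1| < q.2.
    rewrite -(subrK x y) -addrA.
    apply: (le_lt_trans (ler_normD _ _)).
    rewrite distrC in Hxq.
    have : `|y - x| < q.2 / 2 by apply: (lt_le_trans Hy); rewrite ler_pM2r.
    lra.
  have Hx' : `|x - q.1| < q.2 by rewrite distrC; lra.
  have [Oy Gy] := Hq y Hy'; have [_ Gx] := Hq x Hx'.
  split => //.
  rewrite -(subrK (grad F q.1) (grad F y)) -addrA.
  apply: (le_lt_trans (ler_normD _ _)).
  have -> : grad F q.1 - grad F x = - (grad F x - grad F q.1) by rewrite opprB.
  rewrite normrN; lra.
- move=> x Hx.
  have [q Dq] := Hcov x Hx; rewrite /f ballE => Hxq.
  have [Cq q0 Hq] := PD q Dq.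
  exists q.1; first by apply/mapP; exists q.
  have Hx' : `|x - q.1| < q.2 by rewrite distrC; lra.
  have [_ Gx] := Hq x Hx'; lra.
Qed.

End Cover.
Lemma le_sum_term (R : realType) m (f : 'I_m -> R) j :
  (forall i, 0 <= f i) -> f j <= \sum_i f i.
Proof. by move=> H; rewrite (bigD1 j) //= lerDl sumr_ge0. Qed.

Section Main.
Variables (R : realType) (d : nat) (delta : R) (F : 'rV[R]_d -> R).
Hypothesis d0 : (0 < d)%N.
Hypothesis Hd : 0 < delta.
Hypothesis Hconv : convex_on (ccube (d:=d) (- delta) (1 + delta)) F.
Hypothesis Hdiff : forall x, ocube (d:=d) (- delta) (1 + delta) x -> differentiable F x.
Hypothesis Hcont : {in ocube (d:=d) (- delta) (1 + delta), continuous (grad F)}.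

Local Notation G := (grad F).
Local Notation O := (ocube (d:=d) (- delta) (1 + delta)).

Definition ell (p x : 'rV[R]_d) := F p + \sum_i G p ord0 i * (x ord0 i - p ord0 i).
Definition erow (r : R) (k : 'I_d) : 'rV[R]_d := \row_i (if i == k then r else 0).

Lemma mxsubE (A B : 'rV[R]_d) i : (A - B) ord0 i = A ord0 i - B ord0 i.
Proof. by rewrite !mxE. Qed.

Lemma yE x r k i : (x + erow r k) ord0 i = x ord0 i + (if i == k then r else 0).
Proof. by rewrite !mxE. Qed.

Lemma sum_if (f : 'I_d -> R) k r : \sum_i f i * (if i == k then r else 0) = f k * r.
Proof.
rewrite (bigD1 k) //= eqxx big1 ?addr0 // => i ik.
by rewrite (negbTE ik) mulr0.
Qed.

Lemma cube_O x : ccube 0 1 x -> O x.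
Proof. by move=> H i; have /andP[a b] := H i; have := Hd; move=> ?; apply/andP; split; lra. Qed.

Lemma O_cc x : O x -> ccube (- delta) (1 + delta) x.
Proof. by move=> H i; have /andP[a b] := H i; rewrite !ltW. Qed.

Lemma gi' p y : O p -> ccube (- delta) (1 + delta) y ->
  F p + \sum_i G p ord0 i * (y ord0 i - p ord0 i) <= F y.
Proof.
move=> Hp Hy.
have E : \sum_i G p ord0 i * (y - p) ord0 i = \sum_i G p ord0 i * (y ord0 i - p ord0 i).
  by apply: eq_bigr => i _; rewrite mxsubE.
rewrite -E; exact: (@grad_ineq R d delta F Hconv Hdiff p y Hp Hy).
Qed.

Lemma step x p r k : ccube 0 1 x -> ccube 0 1 p -> O (x + erow r k) ->
  r * (G p ord0 k - G (x + erow r k) ord0 k) <= F x - ell p x.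
Proof.
move=> Hx Hp Hy.
have A := gi' _ _ Hy (O_cc _ (cube_O _ Hx)).
have B := gi' _ _ (cube_O _ Hp) (O_cc _ Hy).
have SA : \sum_i G (x + erow r k) ord0 i * (x ord0 i - (x + erow r k) ord0 i)
    = - (G (x + erow r k) ord0 k * r).
  rewrite -sum_if -sumrN; by apply: eq_bigr => i _; rewrite yE opprD addrA subrr add0r mulrN.
have SB : \sum_i G p ord0 i * ((x + erow r k) ord0 i - p ord0 i)
    = \sum_i G p ord0 i * (x ord0 i - p ord0 i) + G p ord0 k * r.
  rewrite -sum_if -big_split; by apply: eq_bigr => j _ /=; rewrite yE -mulrDr addrAC.
rewrite SA in A; rewrite SB in B; rewrite /ell.
lra.
Qed.

Lemma N1 x p k h gam e1 : 0 < h -> ccube 0 1 x -> ccube 0 1 p ->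
  (forall y, `|y - x| <= h -> O y /\ `|G y - G x| < e1) ->
  F x - ell p x <= gam -> `|G x ord0 k - G p ord0 k| <= gam / h + e1.
Proof.
move=> h0 Hx Hp Hy Hg.
have Hn r : `|r| <= h -> `|(x + erow r k) - x| <= h.
  move=> rh; rewrite addrAC subrr add0r; apply: norm_le_coords; first exact: ltW.
  by move=> i; rewrite mxE; case: (i == k) => //; rewrite normr0 ltW.
have hh : `|h| <= h by rewrite ger0_norm // ltW.
have hm : `|- h| <= h by rewrite normrN.
have [Op Gp] := Hy _ (Hn h hh).
have [Om Gm] := Hy _ (Hn (- h) hm).
have Gpk : `|G (x + erow h k) ord0 k - G x ord0 k| < e1.
  by apply: le_lt_trans Gp; rewrite -mxsubE; exact: coord_le_norm.
have Gmk : `|G (x + erow (- h) k) ord0 k - G x ord0 k| < e1.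
  by apply: le_lt_trans Gm; rewrite -mxsubE; exact: coord_le_norm.
have S1 := le_trans (step _ _ _ _ Hx Hp Op) Hg.
have S2 := le_trans (step _ _ _ _ Hx Hp Om) Hg.
rewrite mulNr -mulrN opprB in S2.
have T1 : G p ord0 k - G (x + erow h k) ord0 k <= gam / h.
  by rewrite ler_pdivlMr // mulrC.
have T2 : G (x + erow (- h) k) ord0 k - G p ord0 k <= gam / h.
  by rewrite ler_pdivlMr // mulrC.
move: Gpk Gmk; rewrite !ltr_norml ler_norml => /andP[A1 A2] /andP[B1 B2].
apply/andP; split; lra.
Qed.


Lemma N2 x q e2 : ccube 0 1 x -> ccube 0 1 q -> `|G x - G q| < e2 ->
  F x - ell q x <= d%:R * e2.
Proof.
move=> Hx Hq HG.
have A := gi' _ _ (cube_O _ Hx) (O_cc _ (cube_O _ Hq)).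
have E : \sum_i (G x ord0 i - G q ord0 i) * (x ord0 i - q ord0 i) =
   - (\sum_i G x ord0 i * (q ord0 i - x ord0 i)) - \sum_i G q ord0 i * (x ord0 i - q ord0 i).
  rewrite -sumrN -sumrB; apply: eq_bigr => i _.
  rewrite mulrBl; congr (_ - _); by rewrite -mulrN opprB.
have B : \sum_i (G x ord0 i - G q ord0 i) * (x ord0 i - q ord0 i) <= d%:R * e2.
  have -> : d%:R * e2 = \sum_(i < d) e2 by rewrite sumr_const card_ord mulr_natl.
  apply: ler_sum => i _.
  apply: le_trans (ler_norm _) _; rewrite normrM.
  have a1 : `|G x ord0 i - G q ord0 i| <= e2.
    by rewrite -mxsubE; apply: ltW; apply: le_lt_trans HG; exact: coord_le_norm.
  have a2 : `|x ord0 i - q ord0 i| <= 1.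
    have /andP[? ?] := Hx i; have /andP[? ?] := Hq i; rewrite ler_norml; apply/andP; split; lra.
  by have := ler_pM (normr_ge0 _) (normr_ge0 _) a1 a2; rewrite mulr1.
rewrite /ell; lra.
Qed.


Lemma approx eps : 0 < eps ->
  exists (n : nat) (t : R) (W : 'M[R]_(n, d)) (a : 'rV[R]_n),
       (0 < n)%N /\ 0 < t /\
       exists2 s : R, s < eps &
         forall x, ccube (d:=d) 0 1 x -> enorm (grad F x - softmax_approx t W a x) <= s.
Proof.
move=> eps0.
have dR : 0 < d%:R :> R by rewrite ltr0n.
set c := eps / (2 * d%:R).
have c0 : 0 < c by rewrite divr_gt0 // mulr_gt0.
have [h1 [s1 [h10 _ H1 _]]] := @lebesgue R d delta F Hd Hcont (c / 4) (divr_gt0 c0 (ltr0n _ 4)).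
set h := h1 / 2.
have h0 : 0 < h by rewrite divr_gt0.
set gam := h * c / 4.
have gam0 : 0 < gam by rewrite divr_gt0 // mulr_gt0.
set e2 := gam / (2 * d%:R).
have e20 : 0 < e2 by rewrite divr_gt0 // mulr_gt0.
have [_ [s [_ Hs _ H2]]] := @lebesgue R d delta F Hd Hcont e2 e20.
set n := size s.
have cube0 : ccube (R:=R) (d:=d) 0 1 (const_mx 0) by move=> i; rewrite mxE lexx ler01.
have [c00 c00s _] := H2 _ cube0.
have n0 : (0 < n)%N by rewrite /n; case: (s) c00s.
pose p (j : 'I_n) := nth 0 s j.
have pin j : p j \in s := mem_nth 0 (ltn_ord j).
have pc j : ccube 0 1 (p j) := Hs _ (pin j).
pose W : 'M[R]_(n, d) := \matrix_(j, i) G (p j) ord0 i.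
pose a : 'rV[R]_n := \row_j (F (p j) - \sum_i G (p j) ord0 i * p j ord0 i).
have Ez x j : (x *m W^T + a) ord0 j = ell (p j) x.
  rewrite /ell !mxE addrCA; congr (_ + _).
  rewrite -sumrB; apply: eq_bigr => i _; rewrite !mxE.
  by rewrite mulrBr mulrC.
pose Mw := \sum_j \sum_i `|G (p j) ord0 i|.
have Mw0 : 0 <= Mw by apply: sumr_ge0 => j _; apply: sumr_ge0.
have wMw j i : `|G (p j) ord0 i| <= Mw.
  apply: le_trans (le_sum_term _ _ (fun j => \sum_i `|G (p j) ord0 i|) j _).
    exact: (le_sum_term _ _ (fun i => `|G (p j) ord0 i|)).
  by move=> j'; apply: sumr_ge0.
pose L := 2 * Mw + e2.
have L0 : 0 <= L by rewrite /L; lra.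
pose t := 1 + 8 * n%:R * L / (c * gam).
have nR : 0 < n%:R :> R by rewrite ltr0n.
have t0 : 0 < t.
  rewrite /t; have : 0 <= 8 * n%:R * L / (c * gam).
    by rewrite divr_ge0 ?mulr_ge0 // ltW.
  lra.
exists n, t, W, a; split => //; split => //.
exists (eps / 2); first lra.
move=> x Hx.
suff Hk : forall k, `|(G x - softmax_approx t W a x) ord0 k| <= 3 * c / 4.
  apply: le_trans (enorm_le_sum _) _.
  apply: le_trans (ler_sum _ (fun k _ => Hk k)) _.
  rewrite sumr_const card_ord -[X in X <= _]mulr_natl /c.
  have -> : d%:R * (3 * (eps / (2 * d%:R)) / 4) = 3 * eps / 8.
    by field; rewrite gt_eqF.
  lra.
move=> k.
have [c0' c0s Gc0] := H2 x Hx.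
have j0lt : (index c0' s < n)%N by rewrite index_mem.
pose j0 : 'I_n := Ordinal j0lt.
have pj0 : p j0 = c0' by rewrite /p /= nth_index.
have gap0 : F x - ell (p j0) x <= gam / 2.
  rewrite pj0; apply: le_trans (N2 _ _ _ Hx (Hs _ c0s) Gc0) _.
  rewrite /e2; have -> : d%:R * (gam / (2 * d%:R)) = gam / 2 by field; rewrite gt_eqF.
  by [].
pose S := \sum_l expR (t * ell (p l) x).
have Sge : expR (t * ell (p j0) x) <= S.
  exact: (le_sum_term _ _ (fun l => expR (t * ell (p l) x)) j0 (fun l => ltW (expR_gt0 _))).
have S0 : 0 < S by apply: lt_le_trans (expR_gt0 (t * ell (p j0) x)) Sge.
pose pi j := expR (t * ell (p j) x) / S.
have pi0 j : 0 <= pi j by rewrite divr_ge0 // ltW // expR_gt0.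
have Spi : \sum_j pi j = 1 by rewrite -mulr_suml divff // gt_eqF.
have Eap : softmax_approx t W a x ord0 k = \sum_j pi j * G (p j) ord0 k.
  rewrite /softmax_approx.
  have Es : forall j, softmax (t *: (x *m W^T + a)) ord0 j = pi j.
    have sE : forall (M : 'rV[R]_n) l, (t *: M) ord0 l = t * M ord0 l by move=> M l; rewrite mxE.
    move=> j; rewrite /softmax mxE sE Ez /pi /S; congr (_ / _).
    by apply: eq_bigr => l _; rewrite sE Ez.
  rewrite [LHS]mxE; apply: eq_bigr => j _; rewrite Es /W mxE //.
rewrite mxsubE Eap.
have -> : G x ord0 k - \sum_j pi j * G (p j) ord0 k = \sum_j pi j * (G x ord0 k - G (p j) ord0 k).
  rewrite [RHS](eq_bigr (fun j => pi j * G x ord0 k - pi j * G (p j) ord0 k)); last first.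
    by move=> j _; rewrite mulrBr.
  by rewrite sumrB -mulr_suml Spi mul1r.
apply: le_trans (ler_norm_sum _ _ _) _.
have c4n : 0 <= c / (4 * n%:R) by rewrite divr_ge0 // ltW // mulr_gt0.
have term : forall j, `|pi j * (G x ord0 k - G (p j) ord0 k)| <= pi j * (c / 2) + c / (4 * n%:R).
  move=> j; rewrite normrM (ger0_norm (pi0 j)).
  have [Hg|Hg] := lerP (F x - ell (p j) x) gam.
  - have Hy : forall y, `|y - x| <= h -> O y /\ `|G y - G x| < c / 4.
      move=> y Hy; apply: H1 Hx _; apply: le_lt_trans Hy _; rewrite /h; lra.
    have := N1 x (p j) k h gam (c / 4) h0 Hx (pc j) Hy Hg.
    have -> : gam / h + c / 4 = c / 2 by rewrite /gam; field; rewrite gt_eqF.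
    move=> Hb; have := ler_wpM2l (pi0 j) Hb.
    lra.
  - have Hl : ell (p j) x - ell (p j0) x <= - (gam / 2) by lra.
    have g2 : 0 < gam / 2 by rewrite divr_gt0.
    have pib : pi j <= (1 + t * (gam / 2))^-1.
      have e0' := expR_gt0 (t * ell (p j0) x).
      apply: (@le_trans _ _ (expR (t * ell (p j) x) / expR (t * ell (p j0) x))).
        by rewrite ler_pM2l ?expR_gt0 // lef_pV2 ?posrE.
      rewrite -expRN -expRD.
      apply: (@le_trans _ _ (expR (- (t * (gam / 2))))); last first.
        by apply: expR_neg_le; rewrite mulr_ge0 // ltW.
      rewrite ler_expR.
      have := ler_wpM2l (ltW t0) Hl.
      rewrite mulrBr mulrN; lra.
    have Lb : `|G x ord0 k - G (p j) ord0 k| <= L.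
      have a1 : `|G x ord0 k - G (p j0) ord0 k| <= e2.
        by rewrite -mxsubE; apply: ltW; apply: le_lt_trans _ Gc0; rewrite -pj0; exact: coord_le_norm.
      have a2 := wMw j0 k; have a3 := wMw j k.
      move: a1 a2 a3; rewrite /L !ler_norml => /andP[? ?] /andP[? ?] /andP[? ?].
      apply/andP; split; lra.
    have D0 : 0 < 1 + t * (gam / 2) by have := mulr_gt0 t0 g2; lra.
    have key : (1 + t * (gam / 2))^-1 * L <= c / (4 * n%:R).
      have E : c * (1 + t * (gam / 2)) = c + c * (gam / 2) + 4 * n%:R * L.
        by rewrite /t; field; rewrite !gt_eqF.
      have cg : 0 <= c * (gam / 2) by rewrite mulr_ge0 // ltW.
      rewrite mulrC ler_pdivrMr // mulrAC ler_pdivlMr ?mulr_gt0 //.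
      rewrite E; lra.
    have := ler_pM (pi0 j) (normr_ge0 _) pib Lb.
    have : 0 <= pi j * (c / 2) by rewrite mulr_ge0 // ltW // divr_gt0.
    lra.
apply: le_trans (ler_sum _ (fun j _ => term j)) _.
rewrite big_split /= -mulr_suml Spi mul1r sumr_const card_ord -[X in _ + X]mulr_natl.
have -> : n%:R * (c / (4 * n%:R)) = c / 4 by field; rewrite gt_eqF.
lra.
Qed.
End Main.
Section LSEpart.
Variables (R : realType) (d : nat).

Lemma affine_derive (f : 'rV[R]_d -> R) (x v : 'rV[R]_d) (l : R) :
  (forall h, f (h *: v + x) - f x = h * l) -> is_derive x v f l.
Proof.
move=> Hf.
have E : \forall h \near 0^', h^-1 *: ((f \o shift x) (h *: v) - f x) = l.
  near=> h; rewrite /= /shift Hf /GRing.scale /= mulKf //.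
  by near: h; exact: nbhs_dnbhs_neq.
apply: DeriveDef; first exact: (is_cvg_near_cst l).
exact: lim_near_cst.
Unshelve. all: by end_near.
Qed.

Lemma is_derive_comp1 (f : 'rV[R]_d -> R) (g : R -> R) x v df dg :
  differentiable f x -> is_derive (f x) 1 g dg -> is_derive x v f df ->
  is_derive x v (g \o f) (dg * df).
Proof.
move=> dfx dgx ifx.
have dg' : differentiable g (f x) by apply/derivable1_diffP; exact: ex_derive.
have dgf := differentiable_comp dfx dg'.
apply: DeriveDef; first exact: diff_derivable.
have Ef : 'D_v f x = df by case: ifx.
have Eg : 'D_1 g (f x) = dg by case: dgx.
rewrite deriveE // diff_comp //= -(@deriveE _ _ _ f x v dfx) Ef.
have -> : 'd g (f x) df = df *: 'd g (f x) 1.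
  by rewrite -linearZ /= /GRing.scale /= mulr1.
by rewrite -deriveE // Eg mulrC.
Qed.

End LSEpart.
Section LSE2.
Variables (R : realType) (n d : nat) (t : R) (W : 'M[R]_(n, d)) (a : 'rV[R]_n).
Hypothesis n0 : (0 < n)%N.
Hypothesis t0 : 0 < t.

Definition uu (i : 'I_n) (x : 'rV[R]_d) : R := (x *m W^T + a) ord0 i.
Definition SS (x : 'rV[R]_d) : R := \sum_(i < n) expR (t * uu i x).

Lemma lse_E : lse_fun t W a = fun x => t^-1 * ln (SS x).
Proof. by []. Qed.

Lemma uu_aff i h v x : uu i (h *: v + x) - uu i x = h * (v *m W^T) ord0 i.
Proof. by rewrite /uu mulmxDl -scalemxAl !mxE; ring. Qed.

Lemma uu_conv i (l : R) x y :
  uu i (l *: x + (1 - l) *: y) = l * uu i x + (1 - l) * uu i y.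
Proof. by rewrite /uu !mulmxDl -!scalemxAl !mxE; ring. Qed.

Lemma uu_diff i x : differentiable (uu i) x.
Proof.
have -> : uu i = (\sum_(k < d) ((fun y : 'rV[R]_d => y ord0 k) * cst (W i k))) + cst (a ord0 i).
  apply/funext => y; rewrite /uu fct_sumE /= !mxE; congr (_ + _).
  by apply: eq_bigr => k _; rewrite !mxE.
apply: differentiableD; last exact: differentiable_cst.
apply: differentiable_sum => k; apply: differentiableM; last exact: differentiable_cst.
exact: differentiable_coord.
Qed.

Lemma SS_gt0 x : 0 < SS x.
Proof.
rewrite /SS (bigD1 (Ordinal n0)) //=.
apply: (lt_le_trans (expR_gt0 (t * uu (Ordinal n0) x))).
rewrite lerDl sumr_ge0 // => i _; exact: ltW (expR_gt0 _).
Qed.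

Lemma tuu_diff i x : differentiable (fun y => t * uu i y) x.
Proof.
apply: (@differentiableM _ _ (cst t) (uu i)); [exact: differentiable_cst|exact: uu_diff].
Qed.

Lemma SS_diff x : differentiable SS x.
Proof.
have -> : SS = \sum_(i < n) (expR \o (fun y => t * uu i y)).
  by rewrite fct_sumE.
apply: differentiable_sum => i; apply: differentiable_comp; first exact: tuu_diff.
by apply/derivable1_diffP; exact: derivable_expR.
Qed.

Lemma lse_diff x : differentiable (lse_fun t W a) x.
Proof.
rewrite lse_E.
have -> : (fun x => t^-1 * ln (SS x)) = cst t^-1 * ((@ln R) \o SS) by apply/funext.
apply: (@differentiableM _ _ (cst t^-1) ((@ln R) \o SS)); first exact: differentiable_cst.
apply: differentiable_comp; first exact: SS_diff.
apply/derivable1_diffP; apply: ex_derive; apply: is_derive1_ln; exact: SS_gt0.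
Qed.

Lemma SS_derive x v :
  is_derive x v SS (\sum_(i < n) expR (t * uu i x) * (t * (v *m W^T) ord0 i)).
Proof.
have -> : SS = \sum_(i < n) (expR \o (fun y => t * uu i y)).
  by rewrite fct_sumE.
apply: is_derive_sum => i.
apply: is_derive_comp1; first exact: tuu_diff.
apply: affine_derive => h.
by rewrite -mulrBr uu_aff; ring.
Qed.

Lemma lse_derive x v :
  is_derive x v (lse_fun t W a)
   (t^-1 * ((SS x)^-1 * \sum_(i < n) expR (t * uu i x) * (t * (v *m W^T) ord0 i))).
Proof.
rewrite lse_E.
have -> : (fun x => t^-1 * ln (SS x)) = cst t^-1 * ((@ln R) \o SS) by apply/funext.
have H1 : is_derive x v ((@ln R) \o SS)
   ((SS x)^-1 * \sum_(i < n) expR (t * uu i x) * (t * (v *m W^T) ord0 i)).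
  apply: is_derive_comp1; first exact: SS_diff.
    apply: is_derive1_ln; exact: SS_gt0.
  exact: SS_derive.
have H2 := is_deriveM (is_derive_cst t^-1 x v) H1.
apply: (is_derive_eq H2).
by rewrite /GRing.scale /=; ring.
Qed.

Lemma lse_grad x : grad (lse_fun t W a) x = softmax_approx t W a x.
Proof.
apply/rowP => k.
rewrite /grad mxE (derive_val (is_derive := lse_derive x (delta_mx ord0 k))).
rewrite /softmax_approx /SS /uu -rowE.
set z := x *m W^T + a.
have Es : forall j, softmax (t *: z) ord0 j = expR (t * z ord0 j) / \sum_(l < n) expR (t * z ord0 l).
  move=> j; rewrite /softmax mxE [(t *: z) ord0 j]mxE; congr (_ / _).
  by apply: eq_bigr => l _; rewrite [(t *: z) ord0 l]mxE.
rewrite [X in _ = X]mxE.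
under [X in _ = X]eq_bigr do rewrite Es.
rewrite !mulr_sumr; apply: eq_bigr => i _.
rewrite [row _ _ _ _]mxE [W^T _ _]mxE.
have tn : t != 0 by rewrite gt_eqF.
have Sn : \sum_(i0 < n) expR (t * z ord0 i0) != 0.
  by have := SS_gt0 x; rewrite /SS /uu -/z => /gt_eqF ->.
by field; rewrite Sn tn.
Qed.


End LSE2.
Arguments SS {R n d}. Arguments uu {R n d}. Arguments SS_gt0 {R n d}.
Lemma expR_convex (R : realType) (l p q : R) : 0 <= l <= 1 ->
  expR (l * p + (1 - l) * q) <= l * expR p + (1 - l) * expR q.
Proof.
move=> /andP[l0 l1]; set m := l * p + (1 - l) * q.
have em := expR_gt0 m.
have E1 : expR m * (1 + (p - m)) <= expR p.
  have -> : expR p = expR m * expR (p - m) by rewrite -expRD addrC subrK.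
  by rewrite ler_pM2l // expR_ge1Dx.
have E2 : expR m * (1 + (q - m)) <= expR q.
  have -> : expR q = expR m * expR (q - m) by rewrite -expRD addrC subrK.
  by rewrite ler_pM2l // expR_ge1Dx.
have E : expR m = l * (expR m * (1 + (p - m))) + (1 - l) * (expR m * (1 + (q - m))).
  rewrite /m; ring.
rewrite [leLHS]E; apply: lerD; apply: ler_wpM2l => //; lra.
Qed.

Lemma lse_convex (R : realType) n d (t : R) (W : 'M[R]_(n, d)) a : (0 < n)%N -> 0 < t ->
  convex_on setT (lse_fun t W a).
Proof.
move=> n0 t0 x y _ _ l /andP[l0 l1].
rewrite !lse_E.
set SA := SS t W a x; set SB := SS t W a y.
have SA0 : 0 < SA by exact: SS_gt0.
have SB0 : 0 < SB by exact: SS_gt0.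
set C := expR (l * ln SA + (1 - l) * ln SB).
have C0 : 0 < C by exact: expR_gt0.
have key : SS t W a (l *: x + (1 - l) *: y) <= C.
  rewrite /SS.
  under eq_bigr do rewrite uu_conv.
  have H : forall i, expR (t * (l * uu W a i x + (1 - l) * uu W a i y)) <=
     (l * (expR (t * uu W a i x) / SA) + (1 - l) * (expR (t * uu W a i y) / SB)) * C.
    move=> i.
    have -> : t * (l * uu W a i x + (1 - l) * uu W a i y) =
      (l * (t * uu W a i x - ln SA) + (1 - l) * (t * uu W a i y - ln SB))
      + (l * ln SA + (1 - l) * ln SB) by ring.
    rewrite expRD /C ler_pM2r //.
    apply: le_trans; first by apply: expR_convex; rewrite l0 l1.
    by rewrite !expRD !expRN !lnK ?posrE.
  apply: le_trans (ler_sum _ (fun i _ => H i)) _.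
  rewrite -mulr_suml big_split /= -!mulr_sumr -!mulr_suml -/SA -/SB.
  rewrite !divff ?gt_eqF // !mulr1.
  have -> : l + (1 - l) = 1 by ring.
  by rewrite mul1r.
have Sz := SS_gt0 t W a n0 (l *: x + (1 - l) *: y).
have : ln (SS t W a (l *: x + (1 - l) *: y)) <= l * ln SA + (1 - l) * ln SB.
  by rewrite -[X in _ <= X]expRK -/C ler_ln ?posrE.
have ti : 0 < t^-1 by rewrite invr_gt0.
move=> h.
have := ler_wpM2l (ltW ti) h.
rewrite mulrDr; lra.
Qed.

Theorem theorem1 (R : realType) (d : nat) (delta : R) (F : 'rV[R]_d -> R) :
  (0 < d)%N -> 0 < delta ->
  convex_on (ccube (d:=d) (- delta) (1 + delta)) F ->
  {within ccube (d:=d) (- delta) (1 + delta), continuous F} ->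
  (forall x, ocube (d:=d) (- delta) (1 + delta) x -> differentiable F x) ->
  {in ocube (d:=d) (- delta) (1 + delta), continuous (grad F)} ->
  (forall eps : R, 0 < eps ->
     exists (n : nat) (t : R) (W : 'M[R]_(n, d)) (a : 'rV[R]_n),
       (0 < n)%N /\ 0 < t /\
       exists2 s : R, s < eps &
         forall x, ccube (d:=d) 0 1 x -> enorm (grad F x - softmax_approx t W a x) <= s)
  /\
  (forall (n : nat) (t : R) (W : 'M[R]_(n, d)) (a : 'rV[R]_n),
     (0 < n)%N -> 0 < t ->
     convex_on setT (lse_fun t W a) /\
     forall x, differentiable (lse_fun t W a) x /\
               grad (lse_fun t W a) x = softmax_approx t W a x).
Proof.
move=> d0 Hd Hconv _ Hdiff Hgc; split.
  move=> eps e0; exact: (@approx R d delta F d0 Hd Hconv Hdiff Hgc eps e0).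
move=> n t W a n0 t0; split; first exact: lse_convex.
move=> x; split; first exact: lse_diff.
exact: lse_grad.
Qed.
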